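(* Let $\varepsilon\in\mathbb R$ and let $u\in C^4([-1,1])$ be positive. With $H:=\frac12\bigl(\frac{1}{u\sqrt{1+u'^2}}-\frac{u''}{(1+u'^2)^{3/2}}\bigr)$ define $$M[u](x):=\frac{u(x)u'(x)H'(x)}{1+u'(x)^2}+\frac{u(x)H(x)^2}{\sqrt{1+u'(x)^2}}-\frac{H(x)}{1+u'(x)^2}-\varepsilon\frac{u(x)}{\sqrt{1+u'(x)^2}}.$$ Then $$\frac{d}{dx}M[u](x)=u(x)u'(x)\Bigl\{\frac{1}{u\sqrt{1+u'^2}}\frac{d}{dx}\Bigl(\frac{u}{\sqrt{1+u'^2}}H'\Bigr)+\frac12H\Bigl(\frac{u''}{(1+u'^2)^{3/2}}+\frac{1}{u\sqrt{1+u'^2}}\Bigr)^2-2\varepsilon H\Bigr\}(x).$$ *)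

(* Defs.v *)
From Stdlib Require Import Reals Lra ClassicalEpsilon.
Open Scope R_scope.

Definition Icc (a b : R) (x : R) : Prop := a <= x <= b.

Definition I11 : R -> Prop := Icc (-1) 1.

(* f has derivative l at x relative to the set D
   (one-sided at endpoints of an interval). *)
Definition has_deriv_within (D : R -> Prop) (f : R -> R) (x l : R) : Prop :=
  forall eps, 0 < eps -> exists delta, 0 < delta /\
    forall y, D y -> Rabs (y - x) < delta ->
      Rabs (f y - f x - l * (y - x)) <= eps * Rabs (y - x).

Definition continuous_within (D : R -> Prop) (f : R -> R) (x : R) : Prop :=
  forall eps, 0 < eps -> exists delta, 0 < delta /\
    forall y, D y -> Rabs (y - x) < delta -> Rabs (f y - f x) < eps.

(* Total derivative operator relative to D (a chosen derivative when it exists;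
   unique on a nondegenerate interval). *)
Definition Dw (D : R -> Prop) (f : R -> R) (x : R) : R :=
  epsilon (inhabits 0) (fun l => has_deriv_within D f x l).

Definition Dn (D : R -> Prop) (n : nat) (f : R -> R) : R -> R :=
  Nat.iter n (Dw D) f.

Definition Cn_on (D : R -> Prop) (n : nat) (f : R -> R) : Prop :=
  (forall k, (k < n)%nat -> forall x, D x ->
     has_deriv_within D (Dn D k f) x (Dn D (S k) f x)) /\
  (forall x, D x -> continuous_within D (Dn D n f) x).

Definition du1 (u : R -> R) : R -> R := Dw I11 u.
Definition du2 (u : R -> R) : R -> R := Dw I11 (Dw I11 u).

Definition Hf (u : R -> R) (x : R) : R :=
  / 2 * (1 / (u x * sqrt (1 + du1 u x ^ 2))
         - du2 u x / (sqrt (1 + du1 u x ^ 2)) ^ 3).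

Definition Mf (eps : R) (u : R -> R) (x : R) : R :=
  u x * du1 u x * Dw I11 (Hf u) x / (1 + du1 u x ^ 2)
  + u x * Hf u x ^ 2 / sqrt (1 + du1 u x ^ 2)
  - Hf u x / (1 + du1 u x ^ 2)
  - eps * u x / sqrt (1 + du1 u x ^ 2).

(* Main.v *)
Require Import Defs.
From Stdlib Require Import Reals Lra Lia ClassicalEpsilon.
Open Scope R_scope.

Local Notation d := (has_deriv_within I11).

Lemma dpl_o h z h' : derivable_pt_lim h z h' -> forall e, 0 < e -> exists del, 0 < del /\
  forall w, Rabs (w - z) < del -> Rabs (h w - h z - h' * (w - z)) <= e * Rabs (w - z).
Proof.
  intros H e he. destruct (H e he) as [del Hd]. exists del. split; [apply cond_pos|].
  intros w hw. destruct (Req_dec w z) as [->|hne].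
  - replace (h z - h z - h' * (z - z)) with 0 by ring. rewrite Rminus_diag, Rabs_R0. lra.
  - assert (hne' : w - z <> 0) by lra.
    specialize (Hd (w - z) hne' hw). replace (z + (w - z)) with w in Hd by ring.
    replace (h w - h z - h' * (w - z)) with (((h w - h z) / (w - z) - h') * (w - z)) by (field; auto).
    rewrite Rabs_mult. apply Rmult_le_compat_r; [apply Rabs_pos| lra].
Qed.

Lemma d_comp h h' f a x : derivable_pt_lim h (f x) h' -> d f x a -> d (fun y => h (f y)) x (h' * a).
Proof.
  intros Hh Hf e he.
  set (A := Rabs a + 1). set (B := Rabs h' + 1).
  assert (hA : 0 < A) by (unfold A; pose proof (Rabs_pos a); lra).
  assert (hB : 0 < B) by (unfold B; pose proof (Rabs_pos h'); lra).
  destruct (dpl_o _ _ _ Hh (e / (2 * A))) as [d1 [d1p H1]].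
  { apply Rdiv_lt_0_compat; lra. }
  assert (hm : 0 < Rmin 1 (e / (2 * B))).
  { apply Rmin_glb_lt; [lra|apply Rdiv_lt_0_compat; lra]. }
  destruct (Hf _ hm) as [d2 [d2p H2]].
  exists (Rmin d2 (d1 / A)). split.
  { apply Rmin_glb_lt; [lra|apply Rdiv_lt_0_compat; lra]. }
  intros y Dy hy.
  assert (hy2 : Rabs (y - x) < d2) by (eapply Rlt_le_trans; [exact hy| apply Rmin_l]).
  assert (hy1 : Rabs (y - x) < d1 / A) by (eapply Rlt_le_trans; [exact hy| apply Rmin_r]).
  specialize (H2 y Dy hy2).
  set (r := Rabs (y - x)) in *.
  set (Q := Rabs (f y - f x - a * (y - x))) in *.
  set (m := Rmin 1 (e / (2 * B))) in *.
  assert (m1 : m <= 1) by apply Rmin_l.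
  assert (m2 : m <= e / (2 * B)) by apply Rmin_r.
  assert (hr : 0 <= r) by apply Rabs_pos.
  assert (hP : Rabs (f y - f x) <= A * r).
  { replace (f y - f x) with ((f y - f x - a * (y - x)) + a * (y - x)) by ring.
    eapply Rle_trans; [apply Rabs_triang|]. rewrite Rabs_mult. fold r Q. unfold A.
    assert (Q <= r) by nra. nra. }
  assert (hP1 : Rabs (f y - f x) < d1).
  { eapply Rle_lt_trans; [exact hP|]. apply (Rmult_lt_compat_l A) in hy1; [|lra].
    replace (A * (d1 / A)) with d1 in hy1 by (field; lra). exact hy1. }
  specialize (H1 (f y) hP1).
  replace (h (f y) - h (f x) - h' * a * (y - x)) with
    ((h (f y) - h (f x) - h' * (f y - f x)) + h' * (f y - f x - a * (y - x))) by ring.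
  eapply Rle_trans; [apply Rabs_triang|]. rewrite Rabs_mult. fold Q.
  assert (T1 : e / (2 * A) * Rabs (f y - f x) <= e / 2 * r).
  { replace (e / 2 * r) with (e / (2 * A) * (A * r)) by (field; lra).
    apply Rmult_le_compat_l; [|exact hP]. left; apply Rdiv_lt_0_compat; lra. }
  assert (T2 : Rabs h' * Q <= e / 2 * r).
  { assert (hQ : Q <= e / (2 * B) * r) by (eapply Rle_trans; [exact H2| apply Rmult_le_compat_r; assumption]).
    eapply Rle_trans. apply Rmult_le_compat_l; [apply Rabs_pos|exact hQ].
    replace (Rabs h' * (e / (2 * B) * r)) with ((Rabs h' / B) * (e / 2 * r)) by (field; lra).
    assert (Rabs h' / B <= 1).
    { apply (Rmult_le_reg_r B); [lra|].
      unfold Rdiv. rewrite Rmult_assoc, Rinv_l by lra. unfold B. lra. }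
    assert (0 <= e / 2 * r) by nra.
    assert (0 <= Rabs h' / B) by (apply Rmult_le_pos; [apply Rabs_pos|left; apply Rinv_0_lt_compat; lra]). nra. }
  lra.
Qed.

Lemma d_eq f x l1 l2 : d f x l1 -> l1 = l2 -> d f x l2.
Proof. intros H ->; exact H. Qed.

Lemma d_ext_all f g x l : (forall y, f y = g y) -> d g x l -> d f x l.
Proof. intros E H e he. destruct (H e he) as [del [hd H']]. exists del; split; auto.
  intros y Dy hy. rewrite !E. auto. Qed.

Lemma d_ext f g x l : (forall y, I11 y -> f y = g y) -> I11 x -> d g x l -> d f x l.
Proof. intros E Dx H e he. destruct (H e he) as [del [hd H']]. exists del; split; auto.
  intros y Dy hy. rewrite !E by auto. auto. Qed.

Lemma d_const c x : d (fun _ => c) x 0.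
Proof. intros e he. exists 1. split; [lra|]. intros y _ _.
  replace (c - c - 0 * (y - x)) with 0 by ring. rewrite Rabs_R0.
  apply Rmult_le_pos; [lra|apply Rabs_pos]. Qed.

Lemma d_plus f g x a b : d f x a -> d g x b -> d (fun y => f y + g y) x (a + b).
Proof.
  intros Hf Hg e he.
  destruct (Hf (e/2)) as [d1 [p1 H1]]; [lra|].
  destruct (Hg (e/2)) as [d2 [p2 H2]]; [lra|].
  exists (Rmin d1 d2). split; [apply Rmin_glb_lt; lra|]. intros y Dy hy.
  assert (Rabs (y - x) < d1) by (eapply Rlt_le_trans; [exact hy|apply Rmin_l]).
  assert (Rabs (y - x) < d2) by (eapply Rlt_le_trans; [exact hy|apply Rmin_r]).
  specialize (H1 y Dy ltac:(assumption)). specialize (H2 y Dy ltac:(assumption)).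
  replace (f y + g y - (f x + g x) - (a + b) * (y - x)) with
    ((f y - f x - a * (y - x)) + (g y - g x - b * (y - x))) by ring.
  eapply Rle_trans; [apply Rabs_triang|]. lra.
Qed.

Lemma d_scal c f x a : d f x a -> d (fun y => c * f y) x (c * a).
Proof.
  intros H. eapply d_eq. apply (d_comp (fun z => c * z) (c * 1)).
  exact (derivable_pt_lim_scal id c (f x) 1 (derivable_pt_lim_id _)). exact H. ring.
Qed.

Lemma d_opp f x a : d f x a -> d (fun y => - f y) x (- a).
Proof.
  intros H. eapply d_ext_all with (g := fun y => (-1) * f y). intros; ring.
  eapply d_eq. apply d_scal, H. ring.
Qed.

Lemma d_minus f g x a b : d f x a -> d g x b -> d (fun y => f y - g y) x (a - b).
Proof. intros Hf Hg. apply d_plus; [exact Hf|]. apply d_opp, Hg. Qed.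

Lemma d_sq f x a : d f x a -> d (fun y => f y ^ 2) x (2 * f x * a).
Proof.
  intros H. eapply d_eq. apply (d_comp (fun z => z ^ 2)). exact (derivable_pt_lim_pow (f x) 2).
  exact H. simpl; ring.
Qed.

Lemma d_cube f x a : d f x a -> d (fun y => f y ^ 3) x (3 * f x ^ 2 * a).
Proof.
  intros H. eapply d_eq. apply (d_comp (fun z => z ^ 3)). exact (derivable_pt_lim_pow (f x) 3).
  exact H. simpl; ring.
Qed.

Lemma d_mult f g x a b : d f x a -> d g x b -> d (fun y => f y * g y) x (a * g x + f x * b).
Proof.
  intros Hf Hg.
  apply d_ext_all with (g := fun y => /4 * ((f y + g y) ^ 2 - (f y - g y) ^ 2)).
  { intros; field. }
  eapply d_eq. apply d_scal, d_minus; apply d_sq; [apply d_plus|apply d_minus]; eassumption.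
  cbv beta. field.
Qed.

Lemma d_inv g x b : g x <> 0 -> d g x b -> d (fun y => / g y) x (- b / g x ^ 2).
Proof.
  intros nz H. apply d_ext_all with (g := fun y => 1 / g y). { intros; unfold Rdiv; ring. }
  eapply d_eq. apply (d_comp (fun z => 1 / z)).
  exact (derivable_pt_lim_div (fct_cte 1) id (g x) 0 1 (derivable_pt_lim_const 1 _) (derivable_pt_lim_id _) nz).
  exact H. unfold fct_cte, id, Rsqr. field. exact nz.
Qed.

Lemma d_div f g x a b : g x <> 0 -> d f x a -> d g x b ->
  d (fun y => f y / g y) x (a * / g x + f x * (- b / g x ^ 2)).
Proof. intros nz Hf Hg. apply (d_mult f (fun y => / g y)); [exact Hf| apply d_inv; assumption]. Qed.

Lemma d_sqrt f x a : 0 < f x -> d f x a -> d (fun y => sqrt (f y)) x (/ (2 * sqrt (f x)) * a).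
Proof. intros p H. apply (d_comp sqrt). apply derivable_pt_lim_sqrt, p. exact H. Qed.

Lemma d_uniq f x l1 l2 : I11 x -> d f x l1 -> d f x l2 -> l1 = l2.
Proof.
  intros Dx H1 H2. destruct (Req_dec l1 l2) as [|hne]; [assumption|exfalso].
  set (e := Rabs (l1 - l2) / 4).
  assert (he : 0 < e) by (unfold e; pose proof (Rabs_pos_lt _ (Rminus_eq_contra _ _ hne)); lra).
  destruct (H1 e he) as [d1 [p1 K1]]. destruct (H2 e he) as [d2 [p2 K2]].
  set (t := Rmin (Rmin d1 d2 / 2) 1).
  assert (tp : 0 < t) by (unfold t; apply Rmin_glb_lt; [apply Rdiv_lt_0_compat; [apply Rmin_glb_lt|]|]; lra).
  assert (t1 : t <= 1) by apply Rmin_r.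
  assert (t2 : t <= Rmin d1 d2 / 2) by apply Rmin_l.
  assert (m1 := Rmin_l d1 d2). assert (m2 := Rmin_r d1 d2).
  destruct Dx as [Dx1 Dx2].
  assert (exists y, I11 y /\ Rabs (y - x) = t) as [y [Dy hy]].
  { destruct (Rle_dec 0 x).
    - exists (x - t). split; [split; lra|]. replace (x - t - x) with (- t) by ring.
      rewrite Rabs_Ropp, Rabs_right; lra.
    - exists (x + t). split; [split; lra|]. replace (x + t - x) with t by ring.
      rewrite Rabs_right; lra. }
  assert (Rabs (y - x) < d1) by lra. assert (Rabs (y - x) < d2) by lra.
  specialize (K1 y Dy ltac:(assumption)). specialize (K2 y Dy ltac:(assumption)).
  assert (HH : Rabs ((l1 - l2) * (y - x)) <= 2 * e * t).
  { replace ((l1 - l2) * (y - x)) with ((f y - f x - l2 * (y - x)) - (f y - f x - l1 * (y - x))) by ring.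
    unfold Rminus at 1. eapply Rle_trans; [apply Rabs_triang|]. rewrite Rabs_Ropp. rewrite hy in K1, K2. lra. }
  rewrite Rabs_mult, hy in HH. unfold e in HH. assert (0 < Rabs (l1 - l2) * t) by (apply Rmult_lt_0_compat; [apply Rabs_pos_lt, Rminus_eq_contra, hne| exact tp]). lra.
Qed.

Lemma Dw_eq f x l : I11 x -> d f x l -> Dw I11 f x = l.
Proof.
  intros Dx H. apply (d_uniq f x); [exact Dx| |exact H].
  unfold Dw. apply epsilon_spec. exists l; exact H.
Qed.
Ltac dstep := first [ eassumption | apply d_const | eapply d_minus | eapply d_plus | eapply d_sq
  | eapply d_cube | eapply d_div | eapply d_mult | eapply d_sqrt | eapply d_opp ].

Theorem lemmaB1 (eps : R) (u : R -> R)
  (hC4 : Cn_on I11 4 u) (hpos : forall x, I11 x -> 0 < u x) :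
  forall x, I11 x ->
    has_deriv_within I11 (Mf eps u) x
      (u x * du1 u x *
        ( 1 / (u x * sqrt (1 + du1 u x ^ 2)) *
            Dw I11 (fun y => u y / sqrt (1 + du1 u y ^ 2) * Dw I11 (Hf u) y) x
          + / 2 * Hf u x *
            (du2 u x / (sqrt (1 + du1 u x ^ 2)) ^ 3
             + 1 / (u x * sqrt (1 + du1 u x ^ 2))) ^ 2
          - 2 * eps * Hf u x)).
Proof.
  destruct hC4 as [hd _].
  assert (hu : forall y, I11 y -> d u y (du1 u y)) by exact (hd 0%nat ltac:(lia)).
  assert (hu1 : forall y, I11 y -> d (du1 u) y (du2 u y)) by exact (hd 1%nat ltac:(lia)).
  assert (hu2 : forall y, I11 y -> d (du2 u) y (Dw I11 (du2 u) y)) by exact (hd 2%nat ltac:(lia)).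
  assert (hu3 : forall y, I11 y -> d (Dw I11 (du2 u)) y (Dw I11 (Dw I11 (du2 u)) y))
    by exact (hd 3%nat ltac:(lia)).
  assert (hS1 : forall y, 0 < 1 + du1 u y ^ 2) by (intros; pose proof (pow2_ge_0 (du1 u y)); lra).
  assert (hS : forall y, 0 < sqrt (1 + du1 u y ^ 2)) by (intros; apply sqrt_lt_R0, hS1).
  Ltac pos hpos hS1 hS := repeat first [ apply Rmult_lt_0_compat | apply pow_lt | apply hS
     | apply hpos; assumption | apply hS1 | apply Rinv_0_lt_compat ].
  Ltac nz hpos hS1 hS := first [ apply Rgt_not_eq; unfold Rgt; pos hpos hS1 hS | pos hpos hS1 hS ].
  set (Hp := fun y => / 2 * ( - (du1 u y * sqrt (1 + du1 u y ^ 2) + u y * (du1 u y * du2 u y / sqrt (1 + du1 u y ^ 2)))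
       / (u y * sqrt (1 + du1 u y ^ 2)) ^ 2
     - (Dw I11 (du2 u) y * sqrt (1 + du1 u y ^ 2) ^ 3 - du2 u y * (3 * sqrt (1 + du1 u y ^ 2) ^ 2 * (du1 u y * du2 u y / sqrt (1 + du1 u y ^ 2))))
       / (sqrt (1 + du1 u y ^ 2) ^ 3) ^ 2)).
  assert (hH : forall y, I11 y -> d (Hf u) y (Hp y)).
  { intros y Hy. pose proof (hu y Hy). pose proof (hu1 y Hy). pose proof (hu2 y Hy).
    eapply d_eq. unfold Hf. repeat dstep.
    all: try (nz hpos hS1 hS); try lra.
    unfold Hp. cbv beta. set (S := sqrt (1 + du1 u y ^ 2)).
    assert (0 < u y) by auto. assert (0 < S) by apply hS.
    field. split; lra. }
  assert (hDH : forall y, I11 y -> Dw I11 (Hf u) y = Hp y) by (intros; apply Dw_eq; auto).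
  intros x Hx.
  pose proof (hu x Hx). pose proof (hu1 x Hx). pose proof (hu2 x Hx). pose proof (hu3 x Hx).
  assert (exists h2, d (Dw I11 (Hf u)) x h2) as [h2 Hh2].
  { eexists. apply (d_ext _ Hp _ _ hDH Hx). unfold Hp. repeat dstep.
    all: try (nz hpos hS1 hS); try lra. }
  pose proof (hH x Hx).
  evar (K : R).
  assert (HK : Dw I11 (fun y => u y / sqrt (1 + du1 u y ^ 2) * Dw I11 (Hf u) y) x = K).
  { apply Dw_eq; [exact Hx|]. repeat dstep. all: try (nz hpos hS1 hS); try lra. }
  rewrite HK. unfold K; clear K HK.
  eapply d_eq. unfold Mf. repeat dstep.
  all: try (nz hpos hS1 hS); try lra.
  cbv beta. rewrite !hDH by exact Hx. unfold Hp, Hf.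
  set (S := sqrt (1 + du1 u x ^ 2)).
  assert (hS2 : 1 + du1 u x ^ 2 = S ^ 2) by (unfold S; rewrite pow2_sqrt; [reflexivity| left; apply hS1]).
  rewrite !hS2.
  assert (0 < u x) by auto. assert (0 < S) by apply hS.
  clearbody S. revert hS2. generalize (Dw I11 (du2 u) x) (du1 u x) (du2 u x) h2.
  intros a3 a1 a2 b hS2. field_simplify_eq; [|split; lra].
  assert (e3 : S ^ 3 = S * (1 + a1 ^ 2)) by (rewrite hS2; ring).
  assert (e5 : S ^ 5 = S * (1 + a1 ^ 2) ^ 2) by (rewrite hS2; ring).
  assert (e7 : S ^ 7 = S * (1 + a1 ^ 2) ^ 3) by (rewrite hS2; ring).
  assert (e8 : S ^ 8 = (1 + a1 ^ 2) ^ 4) by (rewrite hS2; ring).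
  assert (e9 : S ^ 9 = S * (1 + a1 ^ 2) ^ 4) by (rewrite hS2; ring).
  rewrite ?e3, ?e5, ?e7, ?e8, ?e9. ring.
Qed.
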